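(* Let $\mathcal{M}=(\Sigma,\Gamma,\mathcal{H},U,M)$ be a QMM, let $n=\dim\mathcal{H}$, and let $\rho_s,\rho_t$ be density operators on $\mathcal{H}$. Then: (1) $\rho_s\sim\rho_t \iff \rho_s\sim^{n^2-1}\rho_t \iff \rho_s\sim_{n^2-1}\rho_t$; (2) for every $k\in\mathbb{N}$, $\rho_s\sim_k\rho_t \iff \rho_s\sim_k^{n^2-1}\rho_t$.
   Context: A quantum Mealy machine (QMM) is a tuple $\mathcal{M}=(\Sigma,\Gamma,\mathcal{H},U,M)$ where $\Sigma$ (inputs) and $\Gamma$ (outputs) are finite alphabets, $\mathcal{H}$ is a finite-dimensional complex Hilbert space, $U=\{U_\sigma:\sigma\in\Sigma\}$ is a family of unitary operators on $\mathcal{H}$, and $M=\{M_\gamma:\gamma\in\Gamma\}$ is a family of linear operators on $\mathcal{H}$ with $\sum_{\gamma}M_\gamma^\dagger M_\gamma=I$. For a word $a$, $|a|$ is its length, $a[i]$ its $i$-th letter (1-indexed), $a[l:r]=a[l]\cdots a[r]$ (empty word $\epsilon$ if $l>r$), and $U_a=U_{a[|a|]}\cdots U_{a[1]}$, $U_\epsilon=I$. A scheduler for $a\in\Sigma^*$ is a finite non-decreasing sequence $\mathcal{S}=(s_1\le\dots\le s_{|\mathcal{S}|})$ of integers with $0\le s_1$ and $s_{|\mathcal{S}|}\le|a|$ (possibly empty). With $s_0=0$, $s_{|\mathcal{S}|+1}=|a|$, set $a_i=a[s_{i-1}+1:s_i]$ for $1\le i\le|\mathcal{S}|+1$. For $b=b_1\cdots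 b_{|\mathcal{S}|}\in\Gamma^{|\mathcal{S}|}$ let $V_{b|a,\mathcal{S}}=U_{a_{|\mathcal{S}|+1}}M_{b_{|\mathcal{S}|}}U_{a_{|\mathcal{S}|}}\cdots M_{b_1}U_{a_1}$, and for an operator $\rho$ let $\rho^{\mathcal{M}}_{b|a,\mathcal{S}}=V_{b|a,\mathcal{S}}\rho V_{b|a,\mathcal{S}}^\dagger$. For a density operator $\rho$, $\Pr^{\mathcal{M}}_\rho(b|a,\mathcal{S})=\operatorname{tr}(\rho^{\mathcal{M}}_{b|a,\mathcal{S}})$. Two density operators $\rho_s,\rho_t$ are: equivalent ($\rho_s\sim\rho_t$) if $\Pr^{\mathcal{M}}_{\rho_s}(b|a,\mathcal{S})=\Pr^{\mathcal{M}}_{\rho_t}(b|a,\mathcal{S})$ for all $a\in\Sigma^*$, schedulers $\mathcal{S}$ for $a$ and $b\in\Gamma^{|\mathcal{S}|}$; equivalent up to $k$ measurements ($\rho_s\sim_k\rho_t$) if this holds for all such triples with $|\mathcal{S}|\le k$; $m$-equivalent ($\rho_s\sim^m\rho_t$) if it holds for all triples with $|a|+|\mathcal{S}|\le m$; and $m$-equivalent up to $k$ measurements ($\rho_s\sim^m_k\rho_t$) if it holds for all triples with $|\mathcal{S}|\le k$ and $|a|+|\mathcal{S}|\le m$. *)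

(* Defs.v *)
From HB Require Import structures.
From mathcomp Require Import all_boot all_order all_algebra.
Set Implicit Arguments. Unset Strict Implicit. Unset Printing Implicit Defensive.
Import Order.TTheory GRing.Theory Num.Theory.
Local Open Scope ring_scope.
Local Open Scope sesquilinear_scope.

(* The Hilbert space H of dimension n is modelled as column vectors 'cV[C]_n,
   C an arbitrary numClosedFieldType (a model of the complex numbers);
   operators are n x n matrices, and A ^t* is the conjugate transpose. *)

Section QMM.
Variables (C : numClosedFieldType) (n : nat) (Sigma Gamma : finType).

Definition is_QMM (U : Sigma -> 'M[C]_n) (M : Gamma -> 'M[C]_n) : Prop :=
  (forall s, U s \is unitarymx) /\
  \sum_(g : Gamma) (M g)^t* *m M g = 1%:M.

Definition psd (rho : 'M[C]_n) : Prop :=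
  forall v : 'cV[C]_n, 0 <= (v^t* *m rho *m v) 0 0.

Definition density (rho : 'M[C]_n) : Prop := psd rho /\ \tr rho = 1.

Variables (U : Sigma -> 'M[C]_n) (M : Gamma -> 'M[C]_n).

(* U_w = U_{w[|w|]} ... U_{w[1]}, U_eps = I *)
Definition Uword (w : seq Sigma) : 'M[C]_n :=
  foldl (fun A x => U x *m A) 1%:M w.

(* a[l+1 : r] (1-indexed letters l+1..r), empty if l >= r *)
Definition subword (a : seq Sigma) (l r : nat) : seq Sigma := drop l (take r a).

Definition scheduler (a : seq Sigma) (S : seq nat) : Prop :=
  sorted leq S /\ all (fun s => s <= size a)%N S.

(* Vaux a prev S b: U_{a_{k+1}} M_{b_k} U_{a_k} ... M_{b_1} U_{a_1}, where
   the first segment starts right after position prev. *)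
Fixpoint Vaux (a : seq Sigma) (prev : nat) (S : seq nat) (b : seq Gamma)
  : 'M[C]_n :=
  match S, b with
  | s :: S', g :: b' => Vaux a s S' b' *m M g *m Uword (subword a prev s)
  | _, _ => Uword (subword a prev (size a))
  end.

Definition Vop (a : seq Sigma) (S : seq nat) (b : seq Gamma) : 'M[C]_n :=
  Vaux a 0 S b.

Definition Pr (rho : 'M[C]_n) (a : seq Sigma) (S : seq nat) (b : seq Gamma) : C :=
  \tr (Vop a S b *m rho *m (Vop a S b)^t*).

Definition equiv_on (P : seq Sigma -> seq nat -> Prop) (rs rt : 'M[C]_n) : Prop :=
  forall (a : seq Sigma) (S : seq nat) (b : seq Gamma),
    scheduler a S -> size b = size S -> P a S -> Pr rs a S b = Pr rt a S b.

Definition qequiv := equiv_on (fun _ _ => True).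
Definition qequiv_k (k : nat) := equiv_on (fun _ S => (size S <= k)%N).
Definition qequiv_m (m : nat) := equiv_on (fun a S => (size a + size S <= m)%N).
Definition qequiv_mk (m k : nat) :=
  equiv_on (fun a S => (size S <= k)%N /\ (size a + size S <= m)%N).

End QMM.

(* Main.v *)
Require Import Defs.
From HB Require Import structures.
From mathcomp Require Import all_boot all_order all_algebra.
From mathcomp Require Import zify.
Set Implicit Arguments. Unset Strict Implicit. Unset Printing Implicit Defensive.
Import Order.TTheory GRing.Theory Num.Theory.
Local Open Scope ring_scope.
Local Open Scope sesquilinear_scope.


Section Words.
Variables (C : numClosedFieldType) (n : nat) (Sigma Gamma : finType).
Variables (U : Sigma -> 'M[C]_n) (M : Gamma -> 'M[C]_n).

Definition op (x : Sigma + Gamma) : 'M[C]_n :=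
  match x with inl s => U s | inr g => M g end.
Definition opf (A : 'M[C]_n) (x : Sigma + Gamma) := op x *m A.
Definition Wop (w : seq (Sigma + Gamma)) : 'M[C]_n := foldl opf 1%:M w.
Definition isr (x : Sigma + Gamma) : bool := if x is inr _ then true else false.
Definition meas (w : seq (Sigma + Gamma)) : nat := count isr w.

Lemma foldl_opf A w : foldl opf A w = Wop w *m A.
Proof.
elim: w A => [|x w IH] A /=; first by rewrite mul1mx.
by rewrite /Wop /= !IH /opf mulmx1 mulmxA.
Qed.

Lemma Wop_cons x w : Wop (x :: w) = Wop w *m op x.
Proof. by rewrite /Wop /= foldl_opf /opf mulmx1. Qed.

Lemma Wop_rcons w x : Wop (rcons w x) = op x *m Wop w.
Proof. by rewrite /Wop foldl_rcons. Qed.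

Lemma Wop_cat w1 w2 : Wop (w1 ++ w2) = Wop w2 *m Wop w1.
Proof. by rewrite /Wop foldl_cat foldl_opf. Qed.

Lemma Wop_inl u : Wop (map inl u) = Uword U u.
Proof.
rewrite /Wop /Uword; move: (1%:M : 'M[C]_n).
by elim: u => [|s u IH] A //=; rewrite IH.
Qed.

Fixpoint tw_aux (a : seq Sigma) (prev : nat) (S : seq nat) (b : seq Gamma)
  : seq (Sigma + Gamma) :=
  match S, b with
  | s :: S', g :: b' => map inl (subword a prev s) ++ inr g :: tw_aux a s S' b'
  | _, _ => map inl (subword a prev (size a))
  end.

Lemma Vaux_tw a prev S b : Vaux U M a prev S b = Wop (tw_aux a prev S b).
Proof.
elim: S prev b => [|s S IH] prev [|g b] //=; first by rewrite Wop_inl.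
- by rewrite Wop_inl.
- by rewrite Wop_inl.
- by rewrite Wop_cat Wop_cons /= -IH Wop_inl.
Qed.

Lemma meas_inl u : meas (map inl u) = 0%N.
Proof. by elim: u. Qed.

Lemma decomp (w : seq (Sigma + Gamma)) :
  (exists u, w = map inl u) \/ exists u g w', w = map inl u ++ inr g :: w'.
Proof.
elim: w => [|[s|g] w IH]; first by left; exists [::].
- case: IH => [[u ->]|[u [g [w' ->]]]]; first by left; exists (s :: u).
  by right; exists (s :: u), g, w'.
- by right; exists [::], g, w.
Qed.

Lemma subword_cat (p u x : seq Sigma) :
  subword (p ++ u ++ x) (size p) (size p + size u) = u.
Proof.
rewrite /subword catA take_size_cat; last by rewrite size_cat.
by rewrite drop_size_cat.
Qed.

Lemma tw_surj k : forall (w : seq (Sigma + Gamma)) (p : seq Sigma), (size w <= k)%N ->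
  exists a' S b, [/\ tw_aux (p ++ a') (size p) S b = w,
     sorted leq S, all (fun s => (size p <= s <= size (p ++ a'))%N) S,
     size b = size S & (size a' + size S = size w)%N /\ meas w = size S].
Proof.
elim: k => [|k IH] w p hw.
- case: w hw => // _; exists [::], [::], [::]; split => //.
  by rewrite /= cats0 /subword take_size drop_size.
- case: (decomp w) hw => [[u ->] _|[u [g [w' ->]]] hw].
  + exists u, [::], [::]; split => //=; last by rewrite size_map addn0 meas_inl.
    by rewrite /subword take_size drop_size_cat.
  + have hw' : (size w' <= k)%N.
      by move: hw; rewrite size_cat /=; lia.
    have [a'' [S' [b'' [Htw Hs Hall Hb [Hsz Hm]]]]] := IH w' (p ++ u) hw'.
    exists (u ++ a''), (size (p ++ u) :: S'), (g :: b''); split.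
    * rewrite /= catA Htw -catA size_cat subword_cat //.
    * rewrite /= path_sortedE; last exact: leq_trans.
      rewrite Hs andbT; apply/allP => s hs; move/allP: Hall => /(_ s hs) /andP[] //.
    * rewrite /= !size_cat; apply/andP; split; first by apply/andP; split; lia.
      apply/allP => s hs; move/allP: Hall => /(_ s hs) /andP[h1 h2].
      rewrite !size_cat in h1 h2 *; apply/andP; split; lia.
    * by rewrite /= Hb.
    * split; last by rewrite /meas count_cat /= -/(meas w') Hm -/(meas (map inl u)) meas_inl.
      by rewrite !size_cat /= size_map -Hsz; lia.
Qed.

Lemma tw_sizes a prev S b : sorted leq S -> all (fun s => (prev <= s <= size a)%N) S ->
  size b = size S -> (prev <= size a)%N ->
  size (tw_aux a prev S b) = (size a - prev + size S)%N /\ meas (tw_aux a prev S b) = size S.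
Proof.
elim: S prev b => [|s S IH] prev [|g b] //=.
- by move=> _ _ _ hp; rewrite size_map /subword size_drop size_take ltnn addn0 meas_inl.
- move=> hs /andP[/andP[h1 h2] hall] [hb] hp.
  have hs' : sorted leq S by move: hs; rewrite path_sortedE; [case/andP|exact: leq_trans].
  have hall' : all (fun s' => (s <= s' <= size a)%N) S.
    move: hs; rewrite path_sortedE; last exact: leq_trans.
    case/andP=> /allP ha _; apply/allP => x hx; rewrite ha //=.
    by move/allP: hall => /(_ x hx) /andP[].
  have [e1 e2] := IH s b hs' hall' hb h2.
  rewrite size_cat /= e1 size_map /subword size_drop size_take.
  rewrite /meas count_cat /= -/(meas (tw_aux a s S b)) e2 -/(meas (map inl _)) meas_inl.
  split=> //; case: ltnP => h3; lia.
Qed.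

End Words.

Section Lin.
Variables (C : numClosedFieldType) (n : nat).
Definition PhiF (A : 'M[C]_n) (X : 'M[C]_n) : 'M[C]_n := A *m X *m A^t*.
Fact PhiF_lin A : linear (PhiF A).
Proof. by move=> a X Y; rewrite /PhiF mulmxDr mulmxDl -!scalemxAr -scalemxAl. Qed.
HB.instance Definition _ A := GRing.isLinear.Build C 'M[C]_n 'M[C]_n _ (PhiF A) (PhiF_lin A).
End Lin.

Section Spaces.
Variables (C : numClosedFieldType) (n : nat) (I1 I2 : finType).
Variables (f1 : I1 -> 'End('M[C]_n)) (f2 : I2 -> 'End('M[C]_n)) (D : 'M[C]_n).

Definition opS (V : {vspace 'M[C]_n}) := (\sum_(i : I1) (f1 i @: V))%VS.
Definition opG (V : {vspace 'M[C]_n}) := (\sum_(i : I2) (f2 i @: V))%VS.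

Fixpoint Y (j m : nat) {struct m} : {vspace 'M[C]_n} :=
  if m is m'.+1 then
    (<[D]> + opS (Y j m') + (if j is j'.+1 then opG (Y j' m') else 0))%VS
  else <[D]>%VS.

Lemma opS_mono V W : (V <= W)%VS -> (opS V <= opS W)%VS.
Proof. by move=> h; apply/subv_sumP => i _; apply: (sumv_sup i) => //; apply: limgS. Qed.
Lemma opG_mono V W : (V <= W)%VS -> (opG V <= opG W)%VS.
Proof. by move=> h; apply/subv_sumP => i _; apply: (sumv_sup i) => //; apply: limgS. Qed.

Lemma D_Y j m : (<[D]> <= Y j m)%VS.
Proof. by case: m => [|m] //=; apply: subv_trans (addvSl _ _); apply: addvSl. Qed.

Lemma Y_monoS j m : (Y j m <= Y j m.+1)%VS.
Proof.
elim: m j => [|m IH] j; first exact: (D_Y j 1).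
rewrite [Y j m.+2]/= [Y j m.+1]/=.
apply: addvS; first by apply: addvS => //; apply: opS_mono.
by case: j => [|j] //; apply: opG_mono.
Qed.

Lemma Y_mono j m m' : (m <= m')%N -> (Y j m <= Y j m')%VS.
Proof.
move=> /subnK <-; elim: (m' - m)%N => [|k IH] //; rewrite addSn.
exact: subv_trans IH (Y_monoS _ _).
Qed.

Lemma Y_monoJ j m : (Y j m <= Y j.+1 m)%VS.
Proof.
elim: m j => [|m IH] j //=.
apply: addvS; first by apply: addvS => //; apply: opS_mono.
by case: j => [|j]; [apply: sub0v | apply: opG_mono].
Qed.

Definition stable j m := forall m', (m <= m')%N -> Y j m' = Y j m.

Lemma perm j m : Y j m.+1 = Y j m -> (if j is j'.+1 then stable j' m else True) ->
  stable j m.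
Proof.
move=> e hl m'; elim: m' => [|m' IH].
  by rewrite leqn0 => /eqP ->.
rewrite leq_eqVlt => /orP[/eqP <- //|]; rewrite ltnS => hm.
rewrite -[in RHS]e /= (IH hm).
by case: j e hl IH => [|j] // e hl IH; rewrite (hl m' hm).
Qed.

Lemma stableS j m : stable j m -> stable j m.+1.
Proof.
move=> h m' hm; rewrite (h m') ?(h m.+1) //; exact: ltnW.
Qed.

Lemma strict j m : Y j m.+1 != Y j m -> (\dim (Y j m) < \dim (Y j m.+1))%N.
Proof.
move=> h; rewrite ltnNge; apply: contra h => hd.
by rewrite eq_sym eqEdim Y_monoS.
Qed.

Lemma step j m : (if j is j'.+1 then stable j' m else True) ->
  (m.+1 <= \dim (Y j m))%N -> (m.+2 <= \dim (Y j m.+1))%N \/ stable j m.+1.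
Proof.
move=> hl hd; case: (eqVneq (Y j m.+1) (Y j m)) => e.
  by right; apply: stableS; apply: perm.
by left; apply: leq_trans (strict e).
Qed.

Lemma growth j m : D != 0 -> (m.+1 <= \dim (Y j m))%N \/ stable j m.
Proof.
move=> hD; elim: j m => [|j IHj] m; elim: m => [|m IHm].
- by left; rewrite /= dim_vline hD.
- case: IHm => [hd|hs]; last by right; apply: stableS.
  exact: step.
- by left; rewrite /= dim_vline hD.
- case: IHm => [hd|hs]; last by right; apply: stableS.
  case: (IHj m) => [hdj|hsj]; last exact: step.
  case: (IHj m.+1) => [hdj1|hsj1].
    by left; apply: leq_trans hdj1 (dimvS (Y_monoJ _ _)).
  case: (eqVneq (Y j m.+1) (Y j m)) => e.
    apply: step => // m' hm'; rewrite leq_eqVlt in hm'; case/orP: hm' => [/eqP <- //|hm'].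
    by rewrite (hsj1 m' hm') e.
  left; apply: leq_trans (dimvS (Y_monoJ _ _)).
  exact: leq_trans (strict e).
Qed.

End Spaces.

Section Conn.
Variables (C : numClosedFieldType) (n : nat) (Sigma Gamma : finType).
Variables (U : Sigma -> 'M[C]_n) (M : Gamma -> 'M[C]_n) (D : 'M[C]_n).

Definition f1 (s : Sigma) : 'End('M[C]_n) := linfun (PhiF (U s)).
Definition f2 (g : Gamma) : 'End('M[C]_n) := linfun (PhiF (M g)).
Definition YY := Y f1 f2 D.
Definition PhiW (w : seq (Sigma + Gamma)) (X : 'M[C]_n) :=
  Wop U M w *m X *m (Wop U M w)^t*.

Lemma adjM (A B : 'M[C]_n) : (A *m B)^t* = B^t* *m A^t*.
Proof. by rewrite trmx_mul map_mxM. Qed.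

Lemma PhiW_nil X : PhiW [::] X = X.
Proof. by rewrite /PhiW /Wop /= trmx1 map_mx1 mul1mx mulmx1. Qed.

Lemma PhiW_rcons w x X : PhiW (rcons w x) X = PhiF (op U M x) (PhiW w X).
Proof. by rewrite /PhiW /PhiF Wop_rcons adjM !mulmxA. Qed.

Lemma PhiW_cons x w X : PhiW (x :: w) X = PhiW w (PhiF (op U M x) X).
Proof. by rewrite /PhiW /PhiF Wop_cons adjM !mulmxA. Qed.

Lemma in_Y w : forall j m, (meas w <= j)%N -> (size w <= m)%N -> PhiW w D \in YY j m.
Proof.
elim/last_ind: w => [|w x IH] j m hm hs.
  by rewrite PhiW_nil; apply: (subvP (D_Y _ _ _ _ _)); apply: memv_line.
case: m hs => [|m]; first by rewrite size_rcons.
rewrite size_rcons ltnS => hs.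
move: hm; rewrite /meas -cats1 count_cat /= addn0 -/(meas w) cats1 PhiW_rcons.
case: x => [s|g] /= hm; rewrite /YY /=.
- rewrite addn0 in hm.
  apply: (subvP (addvSl _ _)); apply: (subvP (addvSr _ _)).
  apply: (subvP (@sumv_sup _ _ _ s xpredT (f1 s @: YY j m)%VS (fun i => f1 i @: YY j m)%VS isT (subvv _))).
  by rewrite -[PhiF _ _](lfunE (PhiF (U s))); apply: memv_img; apply: IH.
- case: j hm => [|j]; first by rewrite addn1.
  rewrite addn1 ltnS => hm.
  apply: (subvP (addvSr _ _)).
  apply: (subvP (@sumv_sup _ _ _ g xpredT (f2 g @: YY j m)%VS (fun i => f2 i @: YY j m)%VS isT (subvv _))).
  by rewrite -[PhiF _ _](lfunE (PhiF (M g))); apply: memv_img; apply: IH.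
Qed.


Lemma PhiW_add v X Y0 : PhiW v (X + Y0) = PhiW v X + PhiW v Y0.
Proof. by rewrite /PhiW mulmxDr mulmxDl. Qed.
Lemma PhiW_scale v c X : PhiW v (c *: X) = c *: PhiW v X.
Proof. by rewrite /PhiW -scalemxAr -scalemxAl. Qed.
Lemma PhiW_0 v : PhiW v 0 = 0.
Proof. by rewrite /PhiW mulmx0 mul0mx. Qed.

Lemma Qlem k N : (forall w, (meas w <= k)%N -> (size w <= N)%N -> \tr (PhiW w D) = 0) ->
  forall m j X, X \in YY j m -> forall v, (meas v + j <= k)%N -> (size v + m <= N)%N ->
  \tr (PhiW v X) = 0.
Proof.
move=> Hyp; elim=> [|m IH] j X hX v hk hN.
  case/vlineP: hX => c ->; rewrite PhiW_scale mxtraceZ Hyp ?mulr0 //; lia.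
move: hX; rewrite /YY /= => /memv_addP [x1 h1 [x2 h2 ->]].
move/memv_addP: h1 => [d hd [s hs ->]].
rewrite !PhiW_add !mxtraceD.
have -> : \tr (PhiW v d) = 0.
  case/vlineP: hd => c ->; rewrite PhiW_scale mxtraceZ Hyp ?mulr0 //; lia.
have -> : \tr (PhiW v s) = 0.
  move/memv_sumP: hs => [vs hvs ->].
  apply: (big_ind (fun Z => \tr (PhiW v Z) = 0)).
  - by rewrite PhiW_0 mxtrace0.
  - by move=> a b ha hb; rewrite PhiW_add mxtraceD ha hb addr0.
  - move=> i _; move/memv_imgP: (hvs i isT) => [u hu ->].
    rewrite /f1 lfunE /= -[U i]/(op U M (inl i)) -PhiW_cons.
    apply: (IH j u _ (inl i :: v)) => //=; lia.
clear hs hd; case: j IH hk h2 => [|j] IH hk h2.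
  by move: h2; rewrite memv0 => /eqP ->; rewrite PhiW_0 mxtrace0 !addr0.
have -> : \tr (PhiW v x2) = 0; last by rewrite !addr0.
move/memv_sumP: h2 => [vs hvs ->].
apply: (big_ind (fun Z => \tr (PhiW v Z) = 0)).
- by rewrite PhiW_0 mxtrace0.
- by move=> a b ha hb; rewrite PhiW_add mxtraceD ha hb addr0.
- move=> i _; move/memv_imgP: (hvs i isT) => [u hu ->].
  rewrite /f2 lfunE /= -[M i]/(op U M (inr i)) -PhiW_cons.
  apply: (IH j u _ (inr i :: v)) => //=; lia.
Qed.

Lemma dimfull : \dim (fullv : {vspace 'M[C]_n}) = (n * n)%N.
Proof. by rewrite dimvf; apply: dim_matrix. Qed.

Lemma mainlem k : (forall w, (meas w <= k)%N -> (size w <= n ^ 2 - 1)%N -> \tr (PhiW w D) = 0) ->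
  forall w, (meas w <= k)%N -> \tr (PhiW w D) = 0.
Proof.
move=> Hyp w hw.
case: (eqVneq D 0) => [->|hD]; first by rewrite PhiW_0 mxtrace0.
have hn : (0 < n)%N.
  case: (posnP n) => // hn0; move/eqP: hD => []; apply/matrixP => i j.
  by have h := ltn_ord i; exfalso; lia.
set N := (n ^ 2 - 1)%N.
have hin : PhiW w D \in YY k N.
  have h1 := in_Y hw (leqnn (size w)).
  case: (growth f1 f2 k N hD) => [hd|hs].
    have -> : YY k N = fullv.
      apply/eqP; rewrite eqEdim subvf dimfull /=.
      apply: leq_trans hd; rewrite /N -mulnn; lia.
    exact: memvf.
  case: (leqP (size w) N) => hsz.
    exact: (subvP (Y_mono _ _ _ _ hsz)).
  by rewrite /YY -(hs (size w) (ltnW hsz)).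
have := Qlem Hyp hin (v := [::]); rewrite PhiW_nil; apply => //=.
Qed.
End Conn.
Section Final.
Variables (C : numClosedFieldType) (n : nat) (Sigma Gamma : finType).
Variables (U : Sigma -> 'M[C]_n) (M : Gamma -> 'M[C]_n) (rs rt : 'M[C]_n).

Lemma Pr_diff a S b :
  Pr U M rs a S b - Pr U M rt a S b = \tr (PhiW U M (tw_aux a 0 S b) (rs - rt)).
Proof.
by rewrite /Pr /PhiW /Vop Vaux_tw mulmxBr mulmxBl linearB.
Qed.

Lemma key k : qequiv_mk U M (n ^ 2 - 1)%N k rs rt -> qequiv_k U M k rs rt.
Proof.
move=> H a S b [hs hall] hb hk; apply/eqP; rewrite -subr_eq0 Pr_diff; apply/eqP.
have [_ hm] : size (tw_aux a 0 S b) = (size a - 0 + size S)%N /\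
              meas (tw_aux a 0 S b) = size S.
  apply: tw_sizes => //; apply/allP => x hx; move/allP: hall => /(_ x hx) //.
apply: (mainlem (k := k)); last by rewrite hm.
move=> w hw hsz.
have [a' [S' [b' [Htw Hs Hall Hb [Hsz Hm]]]]] := @tw_surj Sigma Gamma (size w) w [::] (leqnn (size w)).
move: Htw Hall; rewrite /= => Htw Hall.
rewrite -Htw -Pr_diff; apply/eqP; rewrite subr_eq0; apply/eqP.
apply: H => //.
by split; [rewrite -Hm | rewrite Hsz].
Qed.

End Final.

Theorem theorem1 (C : numClosedFieldType) (n : nat) (Sigma Gamma : finType)
  (U : Sigma -> 'M[C]_n) (M : Gamma -> 'M[C]_n) (rs rt : 'M[C]_n) :
  is_QMM U M -> density rs -> density rt ->
  ((qequiv U M rs rt <-> qequiv_m U M (n ^ 2 - 1)%N rs rt) /\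
   (qequiv_m U M (n ^ 2 - 1)%N rs rt <-> qequiv_k U M (n ^ 2 - 1)%N rs rt)) /\
  (forall k : nat, qequiv_k U M k rs rt <-> qequiv_mk U M (n ^ 2 - 1)%N k rs rt).
Proof.
move=> _ _ _.
have h1 : qequiv_m U M (n ^ 2 - 1)%N rs rt -> qequiv U M rs rt.
  move=> H a S b hs hb _; apply: (key (k := size S)) => //.
  by move=> a' S' b' hs' hb' [_ h]; apply: H.
split; first split.
- split=> // H a S b hs hb _; exact: H.
- split.
  + move=> H a S b hs hb hk; apply: (h1 H) => //.
  + move=> H a S b hs hb hk; apply: H => //; lia.
- move=> k; split; last exact: key.
  by move=> H a S b hs hb [hk _]; apply: H.
Qed.
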